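(* Let $A$ be a ring satisfying the ascending chain condition on semiprime ideals, and let $\varphi: A \to A$ be a surjective ring endomorphism. Then $\ker\varphi$ is contained in the prime radical of $A$.
   Context: The prime radical of $A$ is the intersection of all prime ideals of $A$. For an ideal $J \triangleleft A$, $\sqrt{J}$ is the intersection of the prime ideals containing $J$; $J$ is \emph{semiprime} if $\sqrt J = J$. *)

(* Defs.v *)
From HB Require Import structures.
From mathcomp Require Import all_boot all_order all_algebra.
Set Implicit Arguments. Unset Strict Implicit. Unset Printing Implicit Defensive.
Import GRing.Theory.
Local Open Scope ring_scope.

Section RingIdeals.
Variable R : pzRingType.

Definition is_ideal (I : R -> Prop) : Prop :=
  [/\ I 0,
      (forall x y, I x -> I y -> I (x + y)),
      (forall x, I x -> I (- x)),
      (forall r x, I x -> I (r * x)) &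
      (forall r x, I x -> I (x * r))].

Definition subideal (I J : R -> Prop) : Prop := forall x, I x -> J x.

(* I J ⊆ P  (the product ideal IJ is generated additively by products a*b). *)
Definition prod_sub (I J P : R -> Prop) : Prop :=
  forall a b, I a -> J b -> P (a * b).

Definition prime_ideal (P : R -> Prop) : Prop :=
  [/\ is_ideal P, (exists x, ~ P x) &
      (forall I J, is_ideal I -> is_ideal J -> prod_sub I J P ->
         subideal I P \/ subideal J P)].

Definition prime_radical (x : R) : Prop :=
  forall P, prime_ideal P -> P x.

Definition rad (J : R -> Prop) (x : R) : Prop :=
  forall P, prime_ideal P -> subideal J P -> P x.

Definition semiprime (J : R -> Prop) : Prop :=
  is_ideal J /\ (forall x, rad J x <-> J x).

Definition acc_semiprime : Prop :=
  forall I : nat -> R -> Prop,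
    (forall n, semiprime (I n)) ->
    (forall n, subideal (I n) (I n.+1)) ->
    exists N, forall n, (N <= n)%N -> forall x, I n x <-> I N x.

End RingIdeals.

(* Main.v *)
Require Import Defs.
From HB Require Import structures.
From mathcomp Require Import all_boot all_order all_algebra.
Local Open Scope ring_scope.
Import GRing.Theory.

Section Aux.
Variable A : pzRingType.

Lemma rad_ideal (J : A -> Prop) : is_ideal (Defs.rad J).
Proof.
split.
- by move=> P [[H0 _ _ _ _] _ _] _.
- by move=> x y Hx Hy P HP HJ; case: (HP) => [[_ HD _ _ _] _ _]; apply: HD; [apply: Hx|apply: Hy].
- by move=> x Hx P HP HJ; case: (HP) => [[_ _ HN _ _] _ _]; apply: HN; apply: Hx.
- by move=> r x Hx P HP HJ; case: (HP) => [[_ _ _ HL _] _ _]; apply: HL; apply: Hx.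
- by move=> r x Hx P HP HJ; case: (HP) => [[_ _ _ _ HR] _ _]; apply: HR; apply: Hx.
Qed.

Lemma rad_sub (J : A -> Prop) : subideal J (Defs.rad J).
Proof. by move=> x Jx P _ HJ; apply: HJ. Qed.

Lemma rad_semiprime (J : A -> Prop) : semiprime (Defs.rad J).
Proof.
split; first exact: rad_ideal.
move=> x; split.
- move=> H P HP HJ; apply: H => // y Hy; exact: Hy.
- exact: rad_sub.
Qed.

Variable f : A -> A.
Hypothesis f0 : f 0 = 0.
Hypothesis fD : forall x y, f (x + y) = f x + f y.
Hypothesis fN : forall x, f (- x) = - f x.
Hypothesis fM : forall x y, f (x * y) = f x * f y.
Hypothesis fS : forall y, exists x, f x = y.

Lemma preim_prime (P : A -> Prop) : prime_ideal P -> prime_ideal (fun x => P (f x)).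
Proof.
move=> [[P0 PD PN PL PR] [z Hz] Hpr]; split.
- split.
  + by rewrite f0.
  + by move=> x y Hx Hy; rewrite fD; apply: PD.
  + by move=> x Hx; rewrite fN; apply: PN.
  + by move=> r x Hx; rewrite fM; apply: PL.
  + by move=> r x Hx; rewrite fM; apply: PR.
- by have [y Hy] := fS z; exists y; rewrite Hy.
- move=> I J HI HJ Hs.
  have img : forall K, is_ideal K -> is_ideal (fun y => exists a, K a /\ f a = y).
    move=> K [K0 KD KN KL KR]; split.
    + by exists 0; split.
    + by move=> x y [a [Ka <-]] [b [Kb <-]]; exists (a + b); split; [apply: KD|rewrite fD].
    + by move=> x [a [Ka <-]]; exists (- a); split; [apply: KN|rewrite fN].
    + move=> r x [a [Ka <-]]; have [s <-] := fS r.
      by exists (s * a); split; [apply: KL|rewrite fM].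
    + move=> r x [a [Ka <-]]; have [s <-] := fS r.
      by exists (a * s); split; [apply: KR|rewrite fM].
  have := Hpr _ _ (img _ HI) (img _ HJ).
  case.
  + by move=> a b [a' [Ia <-]] [b' [Jb <-]]; rewrite -fM; apply: Hs.
  + by move=> H; left => x Ix; apply: H; exists x.
  + by move=> H; right => x Ix; apply: H; exists x.
Qed.
End Aux.

Theorem mainTheorem10 (A : pzRingType) (phi : {rmorphism A -> A}) :
  acc_semiprime A ->
  (forall y : A, exists x : A, phi x = y) ->
  forall x : A, phi x = 0 -> prime_radical x.
Proof.
move=> Hacc Hs x Hx P HP.
pose I n := Defs.rad (fun y : A => iter n phi y = 0).
have Hch : forall n, subideal (I n) (I n.+1).
  move=> n y Hy Q HQ HK; apply: Hy => // z Hz; apply: HK.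
  by rewrite iterS Hz rmorph0.
have [N HN] := Hacc I (fun n => rad_semiprime _ _) Hch.
have hom : forall n, [/\ iter n phi 0 = 0,
   (forall x y, iter n phi (x + y) = iter n phi x + iter n phi y),
   (forall x, iter n phi (- x) = - iter n phi x),
   (forall x y, iter n phi (x * y) = iter n phi x * iter n phi y) &
   (forall y, exists x, iter n phi x = y)].
  elim=> [|n [h0 hD hN hM hS]]; first by split=> // y; exists y.
  split=> /=.
  - by rewrite h0 rmorph0.
  - by move=> a b; rewrite hD rmorphD.
  - by move=> a; rewrite hN rmorphN.
  - by move=> a b; rewrite hM rmorphM.
  - move=> y; have [z <-] := Hs y; have [w <-] := hS z; by exists w.
have [h0 hD hN hM hS] := hom N.
have [y Hy] := hS x.
have Hy1 : I N.+1 y by apply: rad_sub; rewrite iterS Hy.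
have HyN : I N y by apply/(HN N.+1 (leqnSn N)).
rewrite -Hy.
have := HyN (fun z => P (iter N phi z)) (@preim_prime A _ h0 hD hN hM hS P HP).
apply => z Hz /=; rewrite Hz; by case: HP => [[]].
Qed.
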